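(* For every integer $N\ge 0$, let $T(N)$ be the number of tilings of a $3\times 4\times n$ box, $n=N/3$, by $N$ bricks of size $1\times 2\times 2$ (and $0$ if $3\nmid N$). Then, as formal power series, \[ \sum_{N\ge 0} T(N)\,z^N=\frac{(1-2z^6)(1-24z^6+122z^{12}-120z^{18})}{(1-z^6)(1-54z^6+646z^{12}-2540z^{18}+2640z^{24})}. \]
   Context: A tiling of a $k\times m\times n$ box (made of $kmn$ unit cubes) by $a\times b\times c$ bricks is a partition of the box into non-overlapping axis-parallel boxes with integer corner coordinates, each congruent (by an axis-permuting placement) to the $a\times b\times c$ brick; all orientations are allowed. Tilings related by symmetries of the box are counted as distinct. The empty tiling counts once for $N=0$. *)

(* Defs.v *)
From mathcomp Require Import all_boot all_order all_algebra.
Unset Printing Implicit Defensive.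
Import GRing.Theory Num.Theory.

(* Unit cubes of a k x m x n box: cube (i,j,l) is [i,i+1]x[j,j+1]x[l,l+1]. *)
Definition cell (k m n : nat) : Type := ('I_k * 'I_m * 'I_n)%type.

Definition box_at (k m n x y z p q r : nat) : {set cell k m n} :=
  [set v : cell k m n | [&& x <= v.1.1 < x + p, y <= v.1.2 < y + q
                          & z <= v.2 < z + r]].

Definition is_brick (k m n a b c : nat) (S : {set cell k m n}) : bool :=
  has (fun d : nat * nat * nat =>
         [exists x : 'I_k.+1, exists y : 'I_m.+1, exists z : 'I_n.+1,
            [&& x + d.1.1 <= k, y + d.1.2 <= m, z + d.2 <= n
              & S == box_at k m n x y z d.1.1 d.1.2 d.2]])
      [:: (a, b, c); (a, c, b); (b, a, c); (b, c, a); (c, a, b); (c, b, a)].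

Definition is_tiling (k m n a b c : nat) (P : {set {set cell k m n}}) : bool :=
  partition P [set: cell k m n] && [forall S in P, is_brick k m n a b c S].

Definition num_tilings (k m n a b c : nat) : nat :=
  #|[set P : {set {set cell k m n}} | is_tiling k m n a b c P]|.

Definition T (N : nat) : nat :=
  if 3 %| N then num_tilings 3 4 (N %/ 3) 1 2 2 else 0.

Local Open Scope ring_scope.

Definition numer17 : {poly int} :=
  (1 - 2%:P * 'X^6) * (1 - 24%:P * 'X^6 + 122%:P * 'X^12 - 120%:P * 'X^18).

Definition denom17 : {poly int} :=
  (1 - 'X^6) *
  (1 - 54%:P * 'X^6 + 646%:P * 'X^12 - 2540%:P * 'X^18 + 2640%:P * 'X^24).

(* Main.v *)
Require Import Defs.
From mathcomp Require Import all_boot all_order all_algebra.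
From mathcomp Require Import zify ssrZ.
From Stdlib Require Import ZArith.
Import GRing.Theory Num.Theory.

Definition tils {T : finType} (F : pred {set T}) (D : {set T}) :=
  [set P : {set {set T}} | partition P D && [forall S in P, F S]].

Lemma tils0 (T : finType) (F : pred {set T}) : #|tils F set0| = 1.
Proof.
rewrite -(cards1 (set0 : {set {set T}})); apply: eq_card => P.
rewrite !inE partition_set0; case: eqP => [->|] //=.
by apply/forallP => S; rewrite inE.
Qed.

Lemma tilsU (T : finType) (F : pred {set T}) (D : {set T}) x :
  x \in D ->
  #|tils F D| = \sum_(B | F B && (x \in B) && (B \subset D)) #|tils F (D :\: B)|.
Proof.
move=> xD.
rewrite -sum1_card (partition_big (fun P => pblock P x)
   (fun B => F B && (x \in B) && (B \subset D))) /=; last first.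
  move=> P; rewrite inE => /andP[pP /forall_inP FP].
  have xc : x \in cover P by rewrite (cover_partition pP).
  have pm := pblock_mem xc.
  by rewrite FP //= mem_pblock xc /= (partitionS pP pm).
apply: eq_bigr => B /andP[/andP[FB xB] BD].
rewrite sum1_card.
have E : [pred i in tils F D | pblock i x == B] =i
          (fun Q => B |: Q) @: tils F (D :\: B).
  move=> P; rewrite !inE; apply/andP/imsetP.
  - case=> /andP[pP /forall_inP FP] /eqP pb.
    have xc : x \in cover P by rewrite (cover_partition pP).
    have BP : B \in P by rewrite -pb pblock_mem.
    exists (P :\ B); last by rewrite setD1K.
    rewrite inE (partitionD1 pP BP) /=.
    by apply/forall_inP => S; rewrite inE => /andP[_ /FP].
  - case=> Q; rewrite inE => /andP[pQ /forall_inP FQ] ->.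
    have Bn0 : B != set0 by apply/set0Pn; exists x.
    have dis : [disjoint B & D :\: B].
      by rewrite -setI_eq0 setDE setICA setICr setI0.
    have pU := partitionU1 pQ Bn0 dis.
    have E2 : B :|: (D :\: B) = D.
      apply/setP => y; rewrite !inE; case: (boolP (y \in B)) => //= yB.
      by rewrite (subsetP BD).
    rewrite E2 in pU.
    rewrite pU /=; split.
      apply/forall_inP => S; rewrite !inE => /orP[/eqP->//|/FQ//].
    apply/eqP; apply: def_pblock => //; first exact: (partition_trivIset pU).
    by rewrite setU11.
rewrite (eq_card E) card_in_imset // => Q1 Q2.
rewrite !inE => /andP[p1 _] /andP[p2 _] e.
have nB : forall Q, partition Q (D :\: B) -> B \notin Q.
  move=> Q pQ; apply/negP => BQ.
  by move: (partitionS pQ BQ) => /subsetP /(_ x xB); rewrite inE xB.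
by rewrite -(setU1K (nB _ p1)) e setU1K // nB.
Qed.

Definition state := seq bool.
Definition inS (s : state) k := nth false s k.
Definition orm (s t : state) : state := [seq inS s k || inS t k | k <- iota 0 12].
Definition disj (s t : state) := all (fun k => ~~ (inS s k && inS t k)) (iota 0 12).
Definition full (s : state) := all (inS s) (iota 0 12).
Definition free (s : state) := find (predC (inS s)) (iota 0 12).
Definition empty : state := nseq 12 false.
Definition pdim (sh : nat) : nat * nat * bool :=
  match sh with 0 => (2,2,false) | 1 => (1,2,true) | _ => (2,1,true) end.
Definition allpl : seq (nat * nat * nat) :=
  [seq (ab, sh) | ab <- [seq (a, b) | a <- iota 0 3, b <- iota 0 4], sh <- iota 0 3].
Definition valid (pl : nat * nat * nat) :=
  (pl.1.1 + (pdim pl.2).1.1 <= 3) && (pl.1.2 + (pdim pl.2).1.2 <= 4).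
Definition plist := [seq pl <- allpl | valid pl].
Definition rm (pl : nat * nat * nat) : state :=
  [seq (pl.1.1 <= k %/ 4 < pl.1.1 + (pdim pl.2).1.1) &&
       (pl.1.2 <= k %% 4 < pl.1.2 + (pdim pl.2).1.2) | k <- iota 0 12].
Definition two (pl : nat * nat * nat) := (pdim pl.2).2.
Definition ok a2 x s s' pl :=
  [&& inS (rm pl) x, disj (rm pl) s & two pl ==> a2 && disj (rm pl) s'].
Fixpoint paths (f : nat) (a2 : bool) (s s' : state) {struct f} : seq state :=
  if full s then [:: s'] else
  match f with 0 => [::] | f'.+1 =>
    flatten [seq paths f' a2 (orm s (rm pl)) (if two pl then orm s' (rm pl) else s')
            | pl <- plist & ok a2 (free s) s s' pl] end.

Lemma inS_orm s t k : k < 12 -> inS (orm s t) k = inS s k || inS t k.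
Proof. by move=> hk; rewrite /inS /orm (nth_map 0) ?size_iota // nth_iota. Qed.
Lemma inS_rm pl k : k < 12 -> inS (rm pl) k =
  (pl.1.1 <= k %/ 4 < pl.1.1 + (pdim pl.2).1.1) &&
  (pl.1.2 <= k %% 4 < pl.1.2 + (pdim pl.2).1.2).
Proof. by move=> hk; rewrite /inS /rm (nth_map 0) ?size_iota // nth_iota. Qed.
Lemma inS_empty k : inS empty k = false.
Proof. by rewrite /inS nth_nseq if_same. Qed.
Lemma fullP s k : full s -> k < 12 -> inS s k.
Proof. by move=> /allP h hk; apply: h; rewrite mem_iota. Qed.
Lemma disjP s t k : disj s t -> k < 12 -> ~~ (inS s k && inS t k).
Proof. by move=> /allP h hk; apply: h; rewrite mem_iota. Qed.
Lemma free_lt s : ~~ full s -> free s < 12.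
Proof. by rewrite -has_predC has_find size_iota. Qed.
Lemma free_notin s : ~~ full s -> ~~ inS s (free s).
Proof.
move=> h; have := h; rewrite -has_predC => /(nth_find 0).
by rewrite nth_iota ?free_lt.
Qed.


Arguments free_lt {s}.
Arguments free_notin {s}.
Arguments fullP {s k}.
Arguments disjP {s t k}.

Ltac bcase := repeat match goal with |- context[inS ?s ?k] => case: (inS s k) end.

Definition idx {n} (v : cell 3 4 n) : nat := 4 * v.1.1 + v.1.2.
Lemma idx_lt {n} (v : cell 3 4 n) : idx v < 12.
Proof. rewrite /idx; have := ltn_ord v.1.1; have := ltn_ord v.1.2; lia. Qed.
Lemma idx_div {n} (v : cell 3 4 n) : idx v %/ 4 = v.1.1.
Proof. rewrite /idx; have := ltn_ord v.1.2; lia. Qed.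
Lemma idx_mod {n} (v : cell 3 4 n) : idx v %% 4 = v.1.2.
Proof. rewrite /idx; have := ltn_ord v.1.2; lia. Qed.

Definition R n l (s s' : state) : {set cell 3 4 n} :=
  [set v : cell 3 4 n | ((v.2 == l :> nat) && ~~ inS s (idx v)) ||
           ((v.2 == l.+1 :> nat) && ~~ inS s' (idx v)) || (l.+1 < v.2)].
Definition slab n l pl : {set cell 3 4 n} :=
  [set v : cell 3 4 n | inS (rm pl) (idx v) && ((v.2 == l :> nat) || two pl && (v.2 == l.+1 :> nat))].

Definition mkc {n} k {l} (H : l < n) : cell 3 4 n :=
  ((inord (k %/ 4), inord (k %% 4)), Ordinal H).
Lemma idx_mkc n k l (H : l < n) : k < 12 -> idx (mkc k H) = k.
Proof.
move=> hk; rewrite /idx /mkc /= !inordK; lia.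
Qed.

Lemma R_ge n l s s' (v : cell 3 4 n) : v \in R n l s s' -> l <= v.2.
Proof. rewrite inE; lia. Qed.
Arguments R_ge {n l s s' v}.
Lemma R_empty n l s s' : n <= l -> R n l s s' = set0.
Proof.
move=> h; apply/setP => v; rewrite !inE; apply/negP; have := ltn_ord v.2; bcase => /=; lia.
Qed.
Lemma R_full n l s s' : full s -> R n l s s' = R n l.+1 s' empty.
Proof.
move=> fs; apply/setP => v; rewrite !inE inS_empty (fullP fs (idx_lt v)) /=.
bcase => /=; apply/idP/idP; lia.
Qed.
Lemma R0 n : R n 0 empty empty = setT.
Proof.
apply/setP => v; rewrite !inE !inS_empty /=; lia.
Qed.
Lemma R_diff n l s s' pl :
  R n l s s' :\: slab n l pl =
  R n l (orm s (rm pl)) (if two pl then orm s' (rm pl) else s').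
Proof.
apply/setP => v; rewrite !inE; case: (two pl) => /=; rewrite !inS_orm ?idx_lt //;
  bcase => /=; apply/idP/idP; lia.
Qed.

Lemma box_slab n l pl :
  box_at 3 4 n pl.1.1 pl.1.2 l (pdim pl.2).1.1 (pdim pl.2).1.2
         (if two pl then 2 else 1) = slab n l pl.
Proof.
apply/setP => v; rewrite !inE inS_rm ?idx_lt // idx_div idx_mod.
by case: (two pl) => /=; apply/idP/idP; lia.
Qed.

Lemma allpl_all : all (fun a => all (fun b => all (fun sh => (a,b,sh) \in allpl)
   (iota 0 3)) (iota 0 4)) (iota 0 3).
Proof. vm_compute. reflexivity. Qed.

Lemma pdim_ge sh : 0 < (pdim sh).1.1 /\ 0 < (pdim sh).1.2.
Proof. by case: sh => [|[|?]]. Qed.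

Lemma plist_mem a b sh : sh < 3 -> a + (pdim sh).1.1 <= 3 ->
  b + (pdim sh).1.2 <= 4 -> (a,b,sh) \in plist.
Proof.
move=> hs ha hb; rewrite mem_filter /valid /= ha hb /=.
have [p1 p2] := pdim_ge sh.
have /allP/(_ a) := allpl_all; rewrite mem_iota => /(_ ltac:(lia)).
move=> /allP/(_ b); rewrite mem_iota => /(_ ltac:(lia)).
by move=> /allP/(_ sh); rewrite mem_iota => /(_ ltac:(lia)).
Qed.

Lemma slab_brick n l pl (hl : l < n) : valid pl -> (two pl -> l.+1 < n) ->
  is_brick 3 4 n 1 2 2 (slab n l pl).
Proof.
case: pl => [[a b] sh] /andP[/= va vb] ht.
apply/hasP; exists ((pdim sh).1.1, (pdim sh).1.2, if two (a,b,sh) then 2 else 1).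
  by rewrite /two /=; case: sh {va vb ht} => [|[|?]].
have [p1 p2] := pdim_ge sh.
apply/existsP; exists (inord a); apply/existsP; exists (inord b).
apply/existsP; exists (inord l).
rewrite /= !inordK; try lia.
rewrite va vb /=; apply/andP; split.
  by move: ht; case: (two _) => /= ht; [have := ht erefl|]; lia.
by rewrite -(box_slab n l (a,b,sh)).
Qed.

Lemma brick_core n l s s' (hl : l < n) (hf : ~~ full s) sh (x0 y0 z0 : nat)
  (B : {set cell 3 4 n}) :
  sh < 3 -> x0 + (pdim sh).1.1 <= 3 -> y0 + (pdim sh).1.2 <= 4 ->
  z0 + (if (pdim sh).2 then 2 else 1) <= n ->
  B = box_at 3 4 n x0 y0 z0 (pdim sh).1.1 (pdim sh).1.2 (if (pdim sh).2 then 2 else 1) ->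
  mkc (free s) hl \in B -> B \subset R n l s s' ->
  B \in map (slab n l) (filter (ok (l.+1 < n) (free s) s s') plist).
Proof.
move=> hsh hx hy hz EB xB BR.
have fl := free_lt hf.
have z0l : z0 = l.
  have := xB; rewrite EB inE /= => /and3P[hx1 hy1 hz1].
  have hz0 : z0 < n by lia.
  have wB : ((mkc (free s) hl).1, Ordinal hz0) \in B.
    rewrite EB inE /= hx1 hy1 /=; case: (pdim sh).2; lia.
  have := R_ge (subsetP BR _ wB) => /=; lia.
subst z0.
have Eslab : B = slab n l (x0, y0, sh).
  by rewrite EB -(box_slab n l (x0,y0,sh)).
apply/mapP; exists (x0,y0,sh); last exact Eslab.
rewrite mem_filter plist_mem // andbT.
apply/and3P; split.
- by move: xB; rewrite Eslab inE idx_mkc // => /andP[].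
- apply/allP => k; rewrite mem_iota => /andP[_ hk]; apply/negP => /andP[r1 s1].
  have c : mkc k hl \in B by rewrite Eslab inE idx_mkc // r1 /= eqxx.
  have := subsetP BR _ c; rewrite inE idx_mkc // s1 /=; bcase; lia.
- apply/implyP => ht.
  have hl1 : l.+1 < n by move: hz; rewrite /two /= in ht; rewrite ht; lia.
  rewrite hl1 /=.
  apply/allP => k; rewrite mem_iota => /andP[_ hk]; apply/negP => /andP[r1 s1].
  have c : mkc k hl1 \in B by rewrite Eslab inE idx_mkc // r1 /= ht eqxx orbT.
  have := subsetP BR _ c; rewrite inE idx_mkc // s1 /=; bcase; lia.
Qed.

Lemma charB n l s s' (hl : l < n) (hf : ~~ full s) (B : {set cell 3 4 n}) :
  (is_brick 3 4 n 1 2 2 B && (mkc (free s) hl \in B) && (B \subset R n l s s')) =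
  (B \in map (slab n l) (filter (ok (l.+1 < n) (free s) s s') plist)).
Proof.
apply/idP/idP.
- case/andP => /andP[/hasP[d dm /existsP[x0 /existsP[y0 /existsP[z0
     /and4P[h1 h2 h3 /eqP EB]]]]] xB] BR.
  move: dm; rewrite !inE => /orP[/eqP Ed|/orP[/eqP Ed|/orP[/eqP Ed|/orP[/eqP Ed|
     /orP[/eqP Ed|/eqP Ed]]]]]; subst d.
  + exact: (@brick_core n l s s' hl hf 1 x0 y0 z0 B).
  + exact: (@brick_core n l s s' hl hf 1 x0 y0 z0 B).
  + exact: (@brick_core n l s s' hl hf 2 x0 y0 z0 B).
  + exact: (@brick_core n l s s' hl hf 0 x0 y0 z0 B).
  + exact: (@brick_core n l s s' hl hf 2 x0 y0 z0 B).
  + exact: (@brick_core n l s s' hl hf 0 x0 y0 z0 B).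
- case/mapP => pl; rewrite mem_filter => /andP[okp plm] ->.
  have va : valid pl by move: plm; rewrite mem_filter => /andP[].
  case/and3P: okp => h1 h2 h3.
  rewrite slab_brick //; last by move=> ht; move: h3; rewrite ht => /andP[].
  rewrite inE idx_mkc ?free_lt // h1 eqxx /=.
  apply/subsetP => v; rewrite !inE => /andP[hv hz].
  case/orP: hz => [/eqP ez|/andP[ht /eqP ez]].
  + by have := disjP h2 (idx_lt v); rewrite hv /= => ns; rewrite ez eqxx ns.
  + rewrite ht /= in h3; case/andP: h3 => _ d'.
    by have := disjP d' (idx_lt v); rewrite hv /= => ns; rewrite ez ns eqxx /= orbT.
Qed.

Lemma uniq_map_inj (T U : eqType) (f : T -> U) s :
  uniq (map f s) -> {in s &, injective f}.
Proof.
elim: s => // a s IH /= /andP[nf us] x y; rewrite !inE.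
move=> /orP[/eqP->|xs] /orP[/eqP->|ys] e //.
- by rewrite e (map_f f ys) in nf.
- by rewrite -e (map_f f xs) in nf.
- exact: IH.
Qed.

Arguments uniq_map_inj {T U f s}.
Lemma uniq_rm : uniq (map rm plist).
Proof. vm_compute. reflexivity. Qed.

Definition cntB {n} (D : {set cell 3 4 n}) :=
  #|tils (fun S : {set cell 3 4 n} => is_brick 3 4 n 1 2 2 S) D|.

Lemma count_step n l s s' (hl : l < n) (hf : ~~ full s) :
  cntB (R n l s s') = \sum_(pl <- plist | ok (l.+1 < n) (free s) s s' pl)
     cntB (R n l (orm s (rm pl)) (if two pl then orm s' (rm pl) else s')).
Proof.
have xR : mkc (free s) hl \in R n l s s'.
  by rewrite inE idx_mkc ?free_lt // free_notin // eqxx.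
rewrite /cntB (@tilsU _ _ _ _ xR).
rewrite -big_filter (perm_big (map (slab n l) (filter (ok (l.+1<n) (free s) s s') plist))).
  by rewrite big_map big_filter; apply: eq_bigr => pl _; rewrite R_diff.
apply: uniq_perm.
- by rewrite filter_uniq // index_enum_uniq.
- rewrite map_inj_in_uniq ?filter_uniq ?(map_uniq uniq_rm) //.
  move=> p1 p2; rewrite mem_filter => /andP[_ m1]; rewrite mem_filter => /andP[_ m2] e.
  apply: (uniq_map_inj uniq_rm _ _ m1 m2).
  apply: (@eq_from_nth _ false); first by rewrite !size_map.
  rewrite size_map size_iota => k hk.
  have : (mkc k hl \in slab n l p1) = (mkc k hl \in slab n l p2) by rewrite e.
  by rewrite !inE idx_mkc // eqxx /= !andbT.
- by move=> B; rewrite mem_filter mem_index_enum andbT charB.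
Qed.

Lemma count_le (r : seq nat) (p1 p2 : pred nat) :
  {in r, forall k, p2 k -> p1 k} -> count p2 r <= count p1 r.
Proof.
elim: r => //= b r IHr sub.
have hb := sub b (mem_head b r).
have h : count p2 r <= count p1 r.
  apply: IHr => k kr; apply: sub; by rewrite inE kr orbT.
by case: (p2 b) hb => [->//|] _; case: (p1 b) => /=; lia.
Qed.

Lemma count_lt (r : seq nat) (p1 p2 : pred nat) :
  {in r, forall k, p2 k -> p1 k} -> (exists2 x, x \in r & p1 x && ~~ p2 x) ->
  count p2 r < count p1 r.
Proof.
elim: r => [_ [x]//|a r IH sub [x]]; rewrite inE => /orP[/eqP->|xr] hx /=.
- have h : count p2 r <= count p1 r.
    apply: count_le => k kr; apply: sub; by rewrite inE kr orbT.
  by case/andP: hx => -> /negbTE ->; rewrite /=; lia.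
- have h : count p2 r < count p1 r.
    apply: IH; last by exists x.
    move=> k kr; apply: sub; by rewrite inE kr orbT.
  have := sub a; rewrite inE eqxx /= => /(_ erefl) ha.
  by case: (p2 a) ha => [->//|] _; case: (p1 a) => /=; lia.
Qed.

Lemma paths0 a2 s s' : paths 0 a2 s s' = if full s then [:: s'] else [::].
Proof. by []. Qed.
Lemma pathsS f a2 s s' : paths f.+1 a2 s s' = if full s then [:: s'] else
    flatten [seq paths f a2 (orm s (rm pl)) (if two pl then orm s' (rm pl) else s')
            | pl <- plist & ok a2 (free s) s s' pl].
Proof. by []. Qed.

Fixpoint Gz (k : nat) (t : state) {struct k} : Z :=
  match k with 0 => 1%Z
  | k'.+1 => (\sum_(t' <- paths 12 (0 < k')%nat t empty) Gz k' t')%R end.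

Lemma Zof_sum (I : Type) (r : seq I) (P : pred I) (F : I -> nat) :
  Z.of_nat (\sum_(i <- r | P i) F i) = (\sum_(i <- r | P i) Z.of_nat (F i))%R.
Proof.
elim: r => [|a r IH]; first by rewrite !big_nil.
rewrite !big_cons; case: (P a) => //; rewrite -IH.
exact: Nat2Z.inj_add.
Qed.

Lemma count_G n : forall k l t, l + k = n ->
  Z.of_nat (cntB (R n l t empty)) = Gz k t.
Proof.
elim=> [|k IHk] l t e.
  by rewrite R_empty ?(tils0) /cntB ?tils0 //; lia.
have hl : l < n by lia.
have e2 : (l.+1 < n) = (0 < k) by apply/idP/idP; lia.
suff inner : forall f s s', count (predC (inS s)) (iota 0 12) <= f ->
    Z.of_nat (cntB (R n l s s')) = (\sum_(t' <- paths f (0 < k)%nat s s') Gz k t')%R.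
  rewrite (inner 12 t empty); first by [].
  by rewrite -(size_iota 0 12) count_size.
elim=> [|f IHf] s s' hc.
  rewrite paths0; case fs: (full s).
    by rewrite R_full // IHk ?big_seq1 //; lia.
  exfalso; have : has (predC (inS s)) (iota 0 12) by rewrite has_predC -/(full s) fs.
  by rewrite has_count; lia.
rewrite pathsS; case fs: (full s).
  by rewrite R_full // IHk ?big_seq1 //; lia.
rewrite count_step ?fs // e2 Zof_sum big_flatten big_map big_filter.
apply: eq_bigr => pl okp; apply: IHf.
have fl := free_lt (negbT fs).
rewrite -ltnS; apply: (leq_trans _ hc); apply: count_lt.
  by move=> k0; rewrite mem_iota => /andP[_ hk]; rewrite /= inS_orm //; apply: contra => ->.
exists (free s); first by rewrite mem_iota.
case/and3P: okp => h1 _ _.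
by rewrite /= free_notin ?fs // inS_orm // h1 orbT.
Qed.


Fixpoint closeS (f : nat) (S : seq state) : seq state :=
  match f with 0 => S | f'.+1 =>
   closeS f' (undup (S ++ flatten [seq paths 12 true t empty | t <- S])) end.
Definition S0 : seq state := Eval vm_compute in closeS 8 [:: empty].

Lemma S0_closed b : all (fun t => all (fun t' => t' \in S0) (paths 12 b t empty)) S0.
Proof. by case: b; vm_compute; reflexivity. Qed.
Lemma empty_in_S0 : empty \in S0.
Proof. vm_compute; reflexivity. Qed.

Definition Pm : seq (seq nat) :=
  Eval vm_compute in [seq [seq index t' S0 | t' <- paths 12 true t empty] | t <- S0].
Definition Pm0 : seq (seq nat) :=
  Eval vm_compute in [seq [seq index t' S0 | t' <- paths 12 false t empty] | t <- S0].
Definition Pmb (b : bool) := if b then Pm else Pm0.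
Lemma PmE b : Pmb b = [seq [seq index t' S0 | t' <- paths 12 b t empty] | t <- S0].
Proof. by case: b; vm_compute; reflexivity. Qed.

Fixpoint vz (k : nat) : seq Z :=
  match k with 0 => nseq 26 1%Z
  | k'.+1 => let v := vz k' in
     [seq foldr Z.add 0%Z [seq nth 0%Z v j | j <- row] | row <- Pmb (0 < k')%nat] end.

Lemma GzS k t : Gz k.+1 t = (\sum_(t' <- paths 12 (0 < k)%nat t empty) Gz k t')%R.
Proof. by []. Qed.
Lemma GzSS k t : Gz k.+2 t = (\sum_(t' <- paths 12 true t empty) Gz k.+1 t')%R.
Proof. by []. Qed.
Lemma vzS k : vz k.+1 =
   [seq foldr Z.add 0%Z [seq nth 0%Z (vz k) j | j <- row] | row <- Pmb (0 < k)%nat].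
Proof. by []. Qed.
Lemma size_S0 : size S0 = 26.
Proof. by vm_compute. Qed.

Lemma Gz_vz k t : t \in S0 -> Gz k t = nth 0%Z (vz k) (index t S0).
Proof.
elim: k t => [|k IH] t tS.
  have -> : vz 0 = nseq 26 1%Z by [].
  by rewrite nth_nseq -size_S0 index_mem tS.
rewrite vzS GzS PmE -map_comp (nth_map empty) ?index_mem // nth_index //.
rewrite -[RHS]/(foldr Z.add 0%Z [seq nth 0%Z (vz k) j | j <- [seq index t' S0 | t' <- paths 12 (0 < k)%nat t empty]]).
rewrite -map_comp.
have : all (fun t' => t' \in S0) (paths 12 (0 < k)%nat t empty).
  by have /allP := S0_closed (0 < k)%nat; apply.
elim: (paths _ _ _ _) => [|a r IHr]; first by rewrite big_nil.
move=> /andP[aS rS]; rewrite big_cons IH // IHr //.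
Qed.

Definition rec k t : Z :=
  ((-2640)%Z * Gz k t + 5180%Z * Gz k.+2 t + (-3186)%Z * Gz k.+4 t +
   700%Z * Gz k.+4.+2 t + (-55)%Z * Gz k.+4.+4 t + Gz k.+4.+4.+2 t)%R.

Lemma rec_step k t : (0 < k)%nat ->
  rec k.+1 t = (\sum_(t' <- paths 12 true t empty) rec k t')%R.
Proof.
move=> hk; rewrite /rec [Gz k.+1 t]GzS hk [Gz k.+3 t]GzSS [Gz k.+4.+1 t]GzSS
  [Gz k.+4.+3 t]GzSS [Gz k.+4.+4.+1 t]GzSS [Gz k.+4.+4.+3 t]GzSS.
by rewrite !big_split -!mulr_sumr.
Qed.

Lemma rec_base : let v1 := vz 1 in let v3 := vz 3 in let v5 := vz 5 in
  let v7 := vz 7 in let v9 := vz 9 in let v11 := vz 11 in all (fun j =>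
   ((-2640)%Z * nth 0%Z v1 j + 5180%Z * nth 0%Z v3 j + (-3186)%Z * nth 0%Z v5 j +
   700%Z * nth 0%Z v7 j + (-55)%Z * nth 0%Z v9 j + nth 0%Z v11 j == 0)%R)
   (iota 0 (size S0)).
Proof. vm_compute; reflexivity. Qed.

Lemma rec0 k t : (0 < k)%nat -> t \in S0 -> rec k t = 0%Z.
Proof.
elim: k t => [//|k IH] t _ tS.
case: k IH => [|k] IH.
  rewrite /rec !Gz_vz //.
  have H := rec_base; cbv zeta in H.
  move: H => /allP/(_ (index t S0)); rewrite mem_iota index_mem tS => /(_ erefl).
  by move/eqP.
rewrite rec_step // big_seq big1 // => t' t'P.
apply: IH => //.
by have /allP/(_ t tS)/allP/(_ t' t'P) := S0_closed true.
Qed.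

Lemma numt n : num_tilings 3 4 n 1 2 2 = cntB [set: cell 3 4 n].
Proof. by []. Qed.

Lemma TZ_eq N : Z.of_nat (T N) = if 3 %| N then Gz (N %/ 3) empty else 0%Z.
Proof.
rewrite /T; case: ifP => // _.
by rewrite numt -R0 (@count_G (N %/ 3) (N %/ 3) 0 empty).
Qed.

Lemma TZ_shift N i j : i = 6 * j -> i <= N ->
  Z.of_nat (T (N - i)) = if 3 %| N then Gz (N %/ 3 - 2 * j) empty else 0%Z.
Proof.
move=> -> h; rewrite TZ_eq.
have -> : (3 %| N - 6 * j) = (3 %| N) by apply/idP/idP; lia.
by case: ifP => // d; congr Gz; lia.
Qed.

Definition TZc k : Z := if 3 %| k then nth 0%Z (vz (k %/ 3)) (index empty S0) else 0%Z.
Lemma TZc_eq k : Z.of_nat (T k) = TZc k.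
Proof. by rewrite TZ_eq /TZc (Gz_vz _ _ empty_in_S0). Qed.

Local Open Scope ring_scope.
From mathcomp Require Import ring.

Definition dI : seq int := [:: 1; 0;0;0;0;0; -55;0;0;0;0;0; 700;0;0;0;0;0;
  -3186;0;0;0;0;0; 5180;0;0;0;0;0;-2640].
Definition nI : seq int := [:: 1; 0;0;0;0;0; -26;0;0;0;0;0; 170;0;0;0;0;0;
  -364;0;0;0;0;0; 240].
Lemma Poly_cons (c : int) s : Poly (c :: s) = Poly s * 'X + c%:P.
Proof. by rewrite -cons_poly_def. Qed.
Lemma Poly_nil : Poly [::] = 0 :> {poly int}.
Proof. by []. Qed.
Lemma dE : denom17 = Poly dI.
Proof. rewrite /denom17 /dI !Poly_cons Poly_nil mul0r add0r; ring. Qed.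
Lemma nE : numer17 = Poly nI.
Proof. rewrite /numer17 /nI !Poly_cons Poly_nil mul0r add0r; ring. Qed.

Lemma sum31 (f : nat -> Z) :
  \sum_(i < 31) Z_of_int (nth 0 dI i) * f i =
  f 0%N + (-55)%Z * f 6%N + 700%Z * f 12%N + (-3186)%Z * f 18%N + 5180%Z * f 24%N
  + (-2640)%Z * f 30%N.
Proof.
rewrite !big_ord_recr big_ord0 /=.
ring.
Qed.

Lemma big_foldrZ (s : seq nat) (G : nat -> Z) :
  \sum_(i <- s) G i = foldr (fun i acc => G i + acc) 0 s.
Proof. by elim: s => [|a s IH]; rewrite ?big_nil ?big_cons ?IH. Qed.

Lemma fin_check : all (fun N => foldr (fun i acc => Z_of_int (nth 0 dI i) * TZc (N - i) + acc)
    0 (iota 0 N.+1) == Z_of_int (nth 0 nI N)) (iota 0 33).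
Proof. vm_compute; reflexivity. Qed.

Lemma ZP (n : nat) : Z_of_int (n%:Z) = Z.of_nat n.
Proof. by []. Qed.


Lemma Zsum m (F : 'I_m -> int) : Z_of_int (\sum_(i < m) F i) = \sum_(i < m) Z_of_int (F i).
Proof. exact: rmorph_sum. Qed.
Lemma ZM (a b : int) : Z_of_int (a * b) = Z_of_int a * Z_of_int b.
Proof. exact: rmorphM. Qed.

Theorem mainTheorem17 :
  forall N : nat,
    \sum_(i < N.+1) denom17`_i * ((T (N - i))%:Z) = numer17`_N.
Proof.
move=> N; apply: (can_inj Z_of_intK).
rewrite Zsum dE nE coef_Poly.
under eq_bigr => i _ do rewrite ZM coef_Poly ZP.
case: (ltnP N 33) => hN.
  under eq_bigr => i _ do rewrite TZc_eq.
  rewrite -(big_mkord xpredT (fun i => Z_of_int (nth 0 dI i) * TZc (N - i))).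
  rewrite /index_iota subn0 big_foldrZ.
  have /allP/(_ N) := fin_check; rewrite mem_iota => /(_ hN) /eqP.
  by [].
rewrite nth_default; last by rewrite /=; lia.
rewrite -(big_mkord xpredT (fun i => Z_of_int (nth 0 dI i) * Z.of_nat (T (N - i)))).
rewrite (big_cat_nat (n := 31)) //=; last lia.
have -> : \sum_(31 <= i < N.+1) Z_of_int (nth 0 dI i) * Z.of_nat (T (N - i)) = 0.
  rewrite big_nat big1 // => i /andP[h _].
  by rewrite (nth_default 0 (h : (size dI <= i)%nat)) mul0r.
rewrite addr0 big_mkord (sum31 (fun i => Z.of_nat (T (N - i)))) /=.
rewrite (TZ_shift N 0 0) //; try lia.
rewrite (TZ_shift N 6 1) //; try lia.
rewrite (TZ_shift N 12 2) //; try lia.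
rewrite (TZ_shift N 18 3) //; try lia.
rewrite (TZ_shift N 24 4) //; try lia.
rewrite (TZ_shift N 30 5) //; try lia.
case: ifP => d; last by rewrite !mulr0 !addr0.
set k := (N %/ 3 - 10)%nat.
have hk : (0 < k)%nat by rewrite /k; lia.
have -> : (N %/ 3 - 2 * 0 = k.+4.+4.+2)%nat by rewrite /k; lia.
have -> : (N %/ 3 - 2 * 1 = k.+4.+4)%nat by rewrite /k; lia.
have -> : (N %/ 3 - 2 * 2 = k.+4.+2)%nat by rewrite /k; lia.
have -> : (N %/ 3 - 2 * 3 = k.+4)%nat by rewrite /k; lia.
have -> : (N %/ 3 - 2 * 4 = k.+2)%nat by rewrite /k; lia.
have := @rec0 k empty hk empty_in_S0; rewrite /rec => H.
rewrite -[in RHS]H; ring.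
Qed.
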